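(* Let $f\in\operatorname{NDPF}^{(1)}_N$ and let $F_f$ be the set of integers that are maximal elements of their fibers under $f$. If $m,m'$ are distinct elements of $F_f\cap\{1,2,\dots,N\}$, then $f(m)\not\equiv f(m')\pmod N$.
   Context: $\operatorname{NDPF}^{(1)}_N$ is the set of functions $f:\mathbb{Z}\to\mathbb{Z}$ that are regressive ($f(i)\le i$), order preserving and skew periodic ($f(i+N)=f(i)+N$), excluding the shift functions $i\mapsto i-t$ with $t\ne0$. The fiber of $i$ under $f$ is $f^{-1}(f(i))$. *)

(* Defs.v *)
From Stdlib Require Import ZArith Znumtheory Lia.
Open Scope Z_scope.

Definition regressive (f : Z -> Z) : Prop := forall i, f i <= i.

Definition order_preserving (f : Z -> Z) : Prop := forall i j, i <= j -> f i <= f j.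

Definition skew_periodic (N : Z) (f : Z -> Z) : Prop := forall i, f (i + N) = f i + N.

Definition is_nonzero_shift (f : Z -> Z) : Prop :=
  exists t, t <> 0 /\ forall i, f i = i - t.

Definition NDPF1 (N : Z) (f : Z -> Z) : Prop :=
  regressive f /\ order_preserving f /\ skew_periodic N f /\ ~ is_nonzero_shift f.

Definition fiber_max (f : Z -> Z) (m : Z) : Prop :=
  forall j, f j = f m -> j <= m.

(* Main.v *)
Require Import Defs.
From Stdlib Require Import ZArith Znumtheory Lia.
Open Scope Z_scope.

Lemma aux (N : Z) (f : Z -> Z) (m m' k : Z) :
  1 <= N -> order_preserving f -> skew_periodic N f ->
  fiber_max f m -> fiber_max f m' -> m < m' < m + N ->
  f m' - f m = k * N -> False.
Proof.
  intros HN Hop Hsk Hm Hm' Hr Hk.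
  assert (H1 : f m <= f m') by (apply Hop; lia).
  destruct (Z_le_gt_dec k 0) as [Hk0|Hk0].
  - assert (Ha : k * N <= 0) by nia.
    assert (He : f m' = f m) by lia.
    specialize (Hm m' He). lia.
  - assert (Hb : k * N >= N) by nia.
    assert (H2 : f m' <= f (m + N)) by (apply Hop; lia).
    rewrite Hsk in H2.
    assert (He2 : f (m + N) = f m') by (rewrite Hsk; lia).
    specialize (Hm' (m + N) He2). lia.
Qed.

Theorem mainTheorem9 (N : Z) (f : Z -> Z) (m m' : Z) :
  1 <= N -> NDPF1 N f ->
  fiber_max f m -> fiber_max f m' ->
  1 <= m <= N -> 1 <= m' <= N -> m <> m' ->
  ~ (N | f m - f m').
Proof.
  intros HN [_ [Hop [Hsk _]]] Hm Hm' Hr Hr' Hne [k Hk].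
  destruct (Z_lt_ge_dec m m') as [Hl|Hl].
  - apply (aux N f m m' (-k)); auto; lia.
  - apply (aux N f m' m k); auto; lia.
Qed.
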